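(* Let $m=pq$ with $p,q$ distinct primes. For each $n\ge2$ and each $i$ with $2\le i\le n$ there exists an edge-labeling $\alpha$ of the complete graph $K_n$ by ideals of $\mathbb{Z}/m\mathbb{Z}$ such that $\operatorname{rk}[\mathbb{Z}/m\mathbb{Z}]_{(K_n,\alpha)}=i$.
   Context: An edge-labeling assigns to each edge of a graph a nonzero proper ideal of $\mathbb{Z}/m\mathbb{Z}$. A spline on an edge-labeled graph $(G,\alpha)$ with vertices $v_1,\dots,v_n$ is a vector $(f_{v_1},\dots,f_{v_n})\in(\mathbb{Z}/m\mathbb{Z})^n$ with $f_{v_i}-f_{v_j}\in\alpha(v_iv_j)$ for every edge; the splines form a $\mathbb{Z}$-module $[\mathbb{Z}/m\mathbb{Z}]_{(G,\alpha)}$, whose rank $\operatorname{rk}$ is the smallest size of a generating set. *)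

(* Defs.v *)
From HB Require Import structures.
From mathcomp Require Import all_boot all_order all_algebra.
Set Implicit Arguments. Unset Strict Implicit. Unset Printing Implicit Defensive.
Import Order.TTheory GRing.Theory Num.Theory.
Local Open Scope ring_scope.

(* Ideals of the ring Z/mZ (modelled as 'Z_m, which is Z/mZ for m >= 2). *)
Definition is_ideal (m : nat) (I : {set 'Z_m}) : Prop :=
  [/\ (0 : 'Z_m) \in I,
      (forall x y, x \in I -> y \in I -> x + y \in I) &
      (forall r x, x \in I -> r * x \in I)].

Definition nonzero_proper_ideal (m : nat) (I : {set 'Z_m}) : Prop :=
  [/\ is_ideal I, I != [set 0] & I != [set: 'Z_m]].

(* Edges of the complete graph K_n: two-element subsets of 'I_n.
   An edge-labeling assigns to each edge a nonzero proper ideal;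
   the values of alpha on non-edges are irrelevant. *)
Definition edge_labeling (n m : nat) (alpha : {set 'I_n} -> {set 'Z_m}) : Prop :=
  forall i j : 'I_n, i != j -> nonzero_proper_ideal (alpha [set i; j]).

Definition is_spline (n m : nat) (alpha : {set 'I_n} -> {set 'Z_m})
  (f : {ffun 'I_n -> 'Z_m}) : Prop :=
  forall i j : 'I_n, i != j -> f i - f j \in alpha [set i; j].

Definition generates (n m : nat) (alpha : {set 'I_n} -> {set 'Z_m})
  (S : {set {ffun 'I_n -> 'Z_m}}) : Prop :=
  (forall s, s \in S -> is_spline alpha s) /\
  (forall f, is_spline alpha f ->
     exists c : {ffun 'I_n -> 'Z_m} -> int, f = \sum_(s in S) s *~ c s).

Definition spline_rank_is (n m : nat) (alpha : {set 'I_n} -> {set 'Z_m})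
  (r : nat) : Prop :=
  (exists S, generates alpha S /\ #|S| = r) /\
  (forall S, generates alpha S -> (r <= #|S|)%N).

(* Main.v *)
Require Import Defs.
From mathcomp Require Import all_boot all_order all_algebra zify.
Set Implicit Arguments. Unset Strict Implicit. Unset Printing Implicit Defensive.
Import Order.TTheory GRing.Theory Num.Theory.
Local Open Scope ring_scope.

Lemma dvd_modm (d m n : nat) : (d %| m)%N -> (d %| n %% m)%N = (d %| n)%N.
Proof.
move=> dm; rewrite [in RHS](divn_eq n m) dvdn_addr //; exact: dvdn_mull.
Qed.

Lemma ZvalD (m : nat) (x y : 'Z_m) : (1 < m)%N -> nat_of_ord (x + y) = ((nat_of_ord x + nat_of_ord y) %% m)%N.
Proof. by move=> hm; have := val_Zp_nat hm (nat_of_ord x + nat_of_ord y)%N; rewrite natrD !natr_Zp. Qed.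

Lemma ZvalM (m : nat) (x y : 'Z_m) : (1 < m)%N -> nat_of_ord (x * y) = ((nat_of_ord x * nat_of_ord y) %% m)%N.
Proof. by move=> hm; have := val_Zp_nat hm (nat_of_ord x * nat_of_ord y)%N; rewrite natrM !natr_Zp. Qed.

Definition dset (m d : nat) : {set 'Z_m} := [set x : 'Z_m | (d %| x)%N].

Lemma dset_ideal m d : (1 < m)%N -> (d %| m)%N -> is_ideal (dset m d).
Proof.
move=> hm dm; split.
- by rewrite inE dvdn0.
- by move=> x y; rewrite !inE ZvalD // dvd_modm // => hx hy; rewrite dvdn_add.
- by move=> r x; rewrite !inE ZvalM // dvd_modm // => hx; rewrite dvdn_mull.
Qed.

Lemma dsetN m d (x : 'Z_m) : (1 < m)%N -> (d %| m)%N -> x \in dset m d -> - x \in dset m d.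
Proof.
move=> hm dm hx; case: (dset_ideal hm dm) => _ _ h.
by rewrite -mulN1r; apply: h.
Qed.

Lemma dsetB m d (x y : 'Z_m) : (1 < m)%N -> (d %| m)%N -> x \in dset m d -> y \in dset m d -> x - y \in dset m d.
Proof.
move=> hm dm hx hy; case: (dset_ideal hm dm) => _ h _.
by apply: h => //; apply: dsetN.
Qed.

Lemma dset_nat m d : (1 < m)%N -> (d %| m)%N -> (d%:R : 'Z_m) \in dset m d.
Proof. by move=> hm dm; rewrite inE val_Zp_nat // dvd_modm. Qed.

Lemma dset_npi m d : (1 < m)%N -> (d %| m)%N -> (1 < d)%N -> (d < m)%N ->
  nonzero_proper_ideal (dset m d).
Proof.
move=> hm dm hd1 hdm; split; first exact: dset_ideal.
- apply/eqP => h; have := dset_nat hm dm; rewrite h inE => /eqP/(congr1 val).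
  by rewrite /= val_Zp_nat // modn_small //; move=> e; rewrite e in hd1.
- apply/eqP => h; have : (1 : 'Z_m) \in dset m d by rewrite h inE.
  rewrite inE.
  have -> : nat_of_ord (1 : 'Z_m) = 1%N by have := val_Zp_nat hm 1%N; rewrite modn_small.
  by rewrite dvdn1 => /eqP e; rewrite e in hd1.
Qed.

Definition Bset n k : {set 'I_n} := [set v : 'I_n | (v <= k)%N].
Definition alph p q n k (E : {set 'I_n}) : {set 'Z_(p*q)} :=
  if E \subset Bset n k then dset (p*q) p else dset (p*q) q.

Lemma alph_edge p q n k (u v : 'I_n) :
  alph p q k [set u; v] = if (u <= k)%N && (v <= k)%N then dset (p*q) p else dset (p*q) q.
Proof. by rewrite /alph subUset !sub1set !inE. Qed.

Lemma pq_facts p q : prime p -> prime q -> p != q ->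
  [/\ (1 < p * q)%N, (p %| p * q)%N, (q %| p * q)%N, (p < p * q)%N & (q < p * q)%N].
Proof.
move=> pp pq _; have p1 := prime_gt1 pp; have q1 := prime_gt1 pq.
split; [nia | exact: dvdn_mulr | exact: dvdn_mull | nia | nia].
Qed.

Lemma alph_labeling p q n k : prime p -> prime q -> p != q ->
  edge_labeling (@alph p q n k).
Proof.
move=> pp pq npq u v _; have p1 := prime_gt1 pp; have q1 := prime_gt1 pq.
case: (pq_facts pp pq npq) => h1 h2 h3 h4 h5.
rewrite alph_edge; case: ifP => _; exact: dset_npi.
Qed.

Lemma alph0 p q n k E : prime p -> prime q -> p != q -> (0 : 'Z_(p*q)) \in @alph p q n k E.
Proof.
move=> pp pq npq; case: (pq_facts pp pq npq) => h1 h2 h3 h4 h5.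
rewrite /alph; case: ifP => _; by case: (dset_ideal h1 h2) => // ; case: (dset_ideal h1 h3).
Qed.

Lemma dsetPQ p q (x : 'Z_(p*q)) : prime p -> prime q -> p != q ->
  x \in dset (p*q) p -> x \in dset (p*q) q -> x = 0.
Proof.
move=> pp pq npq; rewrite !inE => hp hq.
have cop : coprime p q by rewrite prime_coprime // dvdn_prime2 //.
have : (p * q %| x)%N by rewrite Gauss_dvd // hp hq.
case: (pq_facts pp pq npq) => h1 _ _ _ _.
have xlt : (x < p * q)%N by rewrite -[X in (_ < X)%N](Zp_cast h1) ltn_ord.
move=> hd; case: (posnP x) => [x0| xp]; last by have := dvdn_leq xp hd; rewrite leqNgt xlt.
by apply: val_inj; rewrite /= x0.
Qed.

Lemma count_inj (D E : finType) (R : D -> E -> bool) :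
  (forall d, exists e, R d e) -> (forall d d' e, R d e -> R d' e -> d = d') ->
  (#|D| <= #|E|)%N.
Proof.
move=> ex u; pose g d := xchoose (ex d).
have : injective g.
  by move=> d d' h; apply: (u d d' (g d)); [exact: xchooseP | rewrite h; exact: xchooseP].
exact: leq_card.
Qed.

Definition wv n i (j : 'I_i.+1) : 'I_n.+1 :=
  inord (if (j == 0 :> nat) then 0%N else (j + (n - i))%N).

Lemma wv_val n i (j : 'I_i.+1) : (i <= n)%N ->
  (wv n j : nat) = if (j == 0 :> nat) then 0%N else (j + (n - i))%N.
Proof.
move=> hin; rewrite /wv inordK //; have := ltn_ord j; case: ifP => _; lia.
Qed.

Definition qe p q n (v : 'I_n) : {ffun 'I_n -> 'Z_(p*q)} :=
  [ffun x => if x == v then q%:R else 0].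
Definition gen p q n i (j : 'I_i.+1) : {ffun 'I_n.+1 -> 'Z_(p*q)} :=
  if (j == 0 :> nat) then [ffun => 1] else qe p q (wv n j).

Definition inspan n m (S : {set {ffun 'I_n -> 'Z_m}}) (f : {ffun 'I_n -> 'Z_m}) :=
  exists c : {ffun 'I_n -> 'Z_m} -> int, f = \sum_(s in S) s *~ c s.

Lemma inspan0 n m (S : {set {ffun 'I_n -> 'Z_m}}) : inspan S 0.
Proof. by exists (fun _ => 0); rewrite big1 // => s _; rewrite mulr0z. Qed.

Lemma inspanZ n m (S : {set {ffun 'I_n -> 'Z_m}}) s z : s \in S -> inspan S (s *~ z).
Proof.
move=> sS; exists (fun t => if t == s then z else 0).
rewrite (bigD1 s) //= eqxx big1 ?addr0 // => t /andP[_ /negbTE ->]; by rewrite mulr0z.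
Qed.

Lemma inspanD n m (S : {set {ffun 'I_n -> 'Z_m}}) f g :
  inspan S f -> inspan S g -> inspan S (f + g).
Proof.
case=> c1 ->; case=> c2 ->; exists (fun s => c1 s + c2 s).
by rewrite -big_split; apply: eq_bigr => s _; rewrite mulrzDr.
Qed.

Lemma inspan_sum n m (S : {set {ffun 'I_n -> 'Z_m}}) (I : finType) (P : pred I) F :
  (forall j, P j -> inspan S (F j)) -> inspan S (\sum_(j | P j) F j).
Proof. move=> h; apply: big_ind => //; [exact: inspan0 | exact: inspanD]. Qed.

Lemma dset0 m d : (0 : 'Z_m) \in dset m d.
Proof. by rewrite inE /= dvdn0. Qed.

Lemma upper p q n i : prime p -> prime q -> p != q -> (1 <= i <= n)%N ->
  exists S, generates (@alph p q n.+1 (n - i)) S /\ #|S| = i.+1.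
Proof.
move=> pp pq npq /andP[i1 iln].
case: (pq_facts pp pq npq) => h1 h2 h3 h4 h5.
set k := (n - i)%N.
have qnz : (q%:R : 'Z_(p*q)) != 0.
  apply/eqP => /(congr1 (@nat_of_ord _)); rewrite /= val_Zp_nat // modn_small //.
  have := prime_gt0 pq; lia.
have wk : forall j : 'I_i.+1, (j == 0 :> nat) = false -> (k < wv n j)%N.
  by move=> j j0; rewrite wv_val // j0; have := ltn_ord j; move/negbT: j0; lia.
pose S := [set gen p q n j | j : 'I_i.+1].
exists S; split; last first.
  rewrite card_imset ?card_ord // => j1 j2; rewrite /gen.
  case: ifP => a1; case: ifP => a2 h.
  - by apply: val_inj; rewrite /= (eqP a1) (eqP a2).
  - have := congr1 (fun f : {ffun 'I_n.+1 -> 'Z_(p*q)} => f ord0) h; rewrite !ffunE.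
    have /wk := a2; case: eqP => [<- //|_ _ /eqP]; by rewrite oner_eq0.
  - have := congr1 (fun f : {ffun 'I_n.+1 -> 'Z_(p*q)} => f ord0) h; rewrite !ffunE.
    have /wk := a1; case: eqP => [<- //|_ _ /eqP]; by rewrite eq_sym oner_eq0.
  - have := congr1 (fun f : {ffun 'I_n.+1 -> 'Z_(p*q)} => f (wv n j1)) h; rewrite !ffunE eqxx.
    case: eqP => [e _|_ /eqP]; last by rewrite (negbTE qnz).
    have := congr1 (@nat_of_ord _) e; rewrite !wv_val // a1 a2 => e2.
    apply: val_inj => /=; lia.
split.
  move=> s /imsetP[j _ ->] a b ab; rewrite alph_edge.
  case: ifP => hab; rewrite /gen; case: ifP => j0; rewrite !ffunE ?subrr ?dset0 //.
    have wkj := wk j j0; move/andP: hab => [ak bk].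
    rewrite (_ : (a == wv n j) = false); last by apply/negbTE/eqP => e; rewrite e in ak; lia.
    rewrite (_ : (b == wv n j) = false); last by apply/negbTE/eqP => e; rewrite e in bk; lia.
    by rewrite subrr dset0.
  by apply: dsetB => //; case: ifP => _; rewrite ?dset0 ?dset_nat.
move=> f fs.
have fB : forall u : 'I_n.+1, (u <= k)%N -> f u = f ord0.
  move=> u uk; case: (eqVneq u ord0) => [-> //| u0].
  pose wm := (ord_max : 'I_n.+1).
  have wmk : (k < wm)%N by rewrite /=; lia.
  have hP := fs u ord0 u0; rewrite alph_edge uk /= in hP.
  have uw : u != wm by apply/eqP => e; rewrite e in uk; lia.
  have hQ1 := fs u wm uw; rewrite alph_edge (leqNgt wm k) wmk andbF in hQ1.
  have o0w : (ord0 : 'I_n.+1) != wm by rewrite -(inj_eq val_inj) /=; lia.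
  have hQ2 := fs ord0 wm o0w; rewrite alph_edge (leqNgt wm k) wmk andbF in hQ2.
  have hQ : f u - f ord0 \in dset (p * q) q.
    by have := dsetB h1 h3 hQ1 hQ2; rewrite opprB addrA subrK.
  by apply/eqP; rewrite -subr_eq0; apply/eqP; exact: dsetPQ.
have -> : f = [ffun => 1] *~ (f ord0 : nat) + \sum_(v : 'I_n.+1 | (k < v)%N)
     qe p q v *~ (nat_of_ord (f v - f ord0)%R %/ q)%N.
  apply/ffunP => x; rewrite ffunE ffunMzE ffunE sum_ffunE.
  under eq_bigr => v _ do rewrite ffunMzE ffunE.
  have one : (1 : 'Z_(p*q)) *~ (f ord0 : nat) = f ord0 by rewrite -pmulrn natr_Zp.
  case: (leqP x k) => xk.
    rewrite big1; last first.
      move=> v kv; rewrite (_ : (x == v) = false) ?mul0rz //.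
      by apply/negbTE/eqP => e; rewrite e in xk; lia.
    by rewrite addr0 one fB.
  rewrite (bigD1 x) // eqxx big1 ?addr0; last first.
    by move=> v /andP[_ vx]; rewrite eq_sym (negbTE vx) mul0rz.
  have x0 : x != ord0 by apply/eqP => e; rewrite e in xk.
  have hQ := fs x ord0 x0; rewrite alph_edge (leqNgt x k) xk /= inE in hQ.
  by rewrite one -pmulrn -mulrnA (mulnC q) divnK // natr_Zp /= addr0 addrC subrK.
have hh : forall g, inspan S g -> exists c, g = \sum_(s in S) s *~ c s by [].
apply: hh; apply: inspanD.
  by apply: inspanZ; apply/imsetP; exists ord0.
apply: inspan_sum => v kv; apply: inspanZ; apply/imsetP; exists (inord (v - k)) => //.
have vn := ltn_ord v.
rewrite /gen inordK; last by lia.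
rewrite (_ : (v - k == 0)%N = false); last by lia.
congr (qe _ _); apply: val_inj; rewrite /= wv_val // inordK; last by lia.
rewrite (_ : (v - k == 0)%N = false) /=; last by lia.
lia.
Qed.

Lemma lower p q n i (S : {set {ffun 'I_n.+1 -> 'Z_(p*q)}}) :
  prime p -> prime q -> p != q -> (1 <= i <= n)%N ->
  generates (@alph p q n.+1 (n - i)) S -> (i.+1 <= #|S|)%N.
Proof.
move=> pp pq npq /andP[i1 iln] [_ gS].
case: (pq_facts pp pq npq) => h1 h2 h3 h4 h5.
have p1 := prime_gt1 pp.
set k := (n - i)%N.
pose psi (x : 'Z_(p*q)) : 'Z_p := (nat_of_ord x)%:R.
have psin : forall a, psi (a%:R) = a%:R.
  move=> a; rewrite /psi val_Zp_nat // -(Zp_nat_mod p1 (a %% (p * q))) modn_dvdm //.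
  by rewrite Zp_nat_mod.
have psiD : {morph psi : x y / x + y}.
  move=> x y; have -> : x + y = (nat_of_ord x + nat_of_ord y)%:R by rewrite natrD !natr_Zp.
  by rewrite psin natrD.
have psiM : {morph psi : x y / x * y}.
  move=> x y; have -> : x * y = (nat_of_ord x * nat_of_ord y)%:R by rewrite natrM !natr_Zp.
  by rewrite psin natrM.
have psi0 : psi 0 = 0 := psin 0%N.
have psi_sum := big_morph psi psiD psi0.
pose fd (d : {ffun 'I_i.+1 -> 'Z_p}) : {ffun 'I_n.+1 -> 'Z_(p*q)} :=
  [ffun v : 'I_n.+1 => (q%:R * (nat_of_ord (d (inord (v - k))))%:R : 'Z_(p*q))].
have fds : forall d, is_spline (@alph p q n.+1 k) (fd d).
  move=> d a b ab; rewrite alph_edge; case: ifP => hab.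
    move/andP: hab => [ak bk]; rewrite !ffunE.
    have -> : (a - k = 0)%N by lia.
    have -> : (b - k = 0)%N by lia.
    by rewrite subrr dset0.
  apply: dsetB => //; rewrite ffunE mulrC; case: (dset_ideal h1 h3) => _ _ hm;
    apply: hm; exact: dset_nat.
pose R (d : {ffun 'I_i.+1 -> 'Z_p}) (e : {ffun 'I_#|S| -> 'Z_p}) :=
  [forall j : 'I_i.+1, psi (fd d (wv n j)) ==
     \sum_(t < #|S|) psi (enum_val t (wv n j)) * e t].
have Rex : forall d, exists e, R d e.
  move=> d; case: (gS _ (fds d)) => c hc.
  exists [ffun t => psi ((c (enum_val t))%:~R)].
  apply/forallP => j; apply/eqP.
  rewrite [in LHS]hc sum_ffunE psi_sum big_enum_val.
  by apply: eq_bigr => t _; rewrite ffunMzE -mulrzr psiM ffunE.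
have qunit : (q%:R : 'Z_p) \is a GRing.unit.
  by rewrite unitZpE // prime_coprime // dvdn_prime2.
have Runi : forall d d' e, R d e -> R d' e -> d = d'.
  move=> d d' e /forallP h /forallP h'; apply/ffunP => j.
  move: (h j) (h' j) => /eqP e1 /eqP e2; rewrite -e2 in e1.
  have wj : inord (wv n j - k) = j.
    have hj := ltn_ord j.
    have wk : (wv n j - k)%N = j.
      rewrite wv_val //; case: eqP => hj0 /=; lia.
    by apply: val_inj => /=; rewrite wk inordK.
  rewrite !ffunE !psiM !psin wj !natr_Zp in e1.
  exact: (mulrI qunit).
have := count_inj Rex Runi; rewrite !card_ffun !card_ord Zp_cast //.
by rewrite leq_exp2l.
Qed.

Local Close Scope ring_scope.

Theorem mainTheorem12 (p q : nat) :
  prime p -> prime q -> p != q ->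
  forall n i : nat, (2 <= n)%N -> (2 <= i <= n)%N ->
  exists alpha : {set 'I_n} -> {set 'Z_(p * q)},
    edge_labeling alpha /\ spline_rank_is alpha i.
Proof.
move=> pp pq npq n i hn /andP[hi hin].
case: n hn hin => [|n] // hn hin; case: i hi hin => [|i] // hi hin.
exists (@alph p q n.+1 (n - i)); split; first exact: alph_labeling.
have hi' : (1 <= i <= n)%N by apply/andP; split.
split; first exact: (upper pp pq npq hi').
by move=> S gS; exact: (lower pp pq npq hi' gS).
Qed.
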